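(* Let $T$ be a tree and let $D\subseteq L(T)$ be a set of legs of $T$ with an even number of elements. Then there exists a unique cycle $C$ in $T$ whose set of legs is $D$.
   Context: A graph $T$ is a finite set $X(T)$ with idempotent root map $r$ and involution $\iota$ fixing $r(X(T))$ pointwise; vertices are $r(X(T))$, half-edges the rest, edges the size-2 $\iota$-orbits of half-edges, legs the $\iota$-fixed half-edges. A tree is a connected weighted graph of genus $0$ (so $\#E-\#V+1=0$ and all vertex weights are $0$). A subgraph is a subset of $X(T)$ preserved by $r$ and $\iota$, with weights restricted. For a subgraph $C$ and $v\in V(C)$, $\mathrm{val}_C(v)$ is the number of half-edges of $C$ rooted at $v$. A cycle in $T$ is a subgraph $C$ such that every vertex $v$ of $C$ satisfies $2-2g(v)-\mathrm{val}_C(v)\leq0$ and $\mathrm{val}_C(v)$ is even. The legs of $C$ are the legs of $T$ lying in $C$. *)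

(* Defs.v *)
From mathcomp Require Import all_boot all_order all_algebra.
Set Implicit Arguments. Unset Strict Implicit. Unset Printing Implicit Defensive.
Import GRing.Theory Num.Theory.

(* A (weighted) graph: finite set X with idempotent root map r and an
   involution iota fixing r(X) pointwise; vertex weights g (only the values
   at vertices matter). *)
Record graph := Graph {
  gX : finType;
  groot : gX -> gX;
  giota : gX -> gX;
  gweight : gX -> nat;
  groot_idem : forall x, groot (groot x) = groot x;
  giota_invol : forall x, giota (giota x) = x;
  giota_root : forall x, giota (groot x) = groot x
}.

Section GraphDefs.
Variable T : graph.
Local Notation X := (gX T) (only parsing).
Local Notation r := (@groot T) (only parsing).
Local Notation iota := (@giota T) (only parsing).

Definition vertices : {set X} := [set x | r x == x].
Definition half_edges : {set X} := [set x | r x != x].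
Definition legs : {set X} := [set x in half_edges | iota x == x].
Definition edges : {set {set X}} :=
  [set [set x; iota x] | x in [set x in half_edges | iota x != x]].

Definition adj : rel X := fun v w =>
  [exists h, [&& h \in half_edges, iota h != h, r h == v & r (iota h) == w]].

Definition connected_graph : Prop :=
  forall v w, v \in vertices -> w \in vertices -> fingraph.connect adj v w.

(* tree: connected, genus 0 (#E - #V + 1 = 0 and all vertex weights 0) *)
Definition is_tree : Prop :=
  [/\ connected_graph,
      ((Posz #|edges| - Posz #|vertices| + 1)%R = (0%R : int))
    & forall v, v \in vertices -> @gweight T v = 0%N].

Definition subgraph (C : {set X}) : Prop :=
  forall x, x \in C -> r x \in C /\ iota x \in C.

Definition val (C : {set X}) (v : X) : nat :=
  #|[set h in C | (h \in half_edges) && (r h == v)]|.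

Definition is_cycle (C : {set X}) : Prop :=
  subgraph C /\
  forall v, v \in C -> v \in vertices ->
    ((2 - 2 * Posz (@gweight T v) - Posz (val C v) <= (0 : int))%R /\ ~~ odd (val C v)).

Definition legs_of (C : {set X}) : {set X} := C :&: legs.

End GraphDefs.

(* Main.v *)
Require Import Defs.
From mathcomp Require Import all_boot all_order all_algebra.
From mathcomp Require Import zify.
Set Implicit Arguments. Unset Strict Implicit. Unset Printing Implicit Defensive.

Section Aux.
Variable T : graph.
Local Notation X := (gX T).
Local Notation rt := (@groot T).
Local Notation io := (@giota T).

Definition sd (A B : {set X}) : {set X} := (A :\: B) :|: (B :\: A).

Lemma in_sd A B x : (x \in sd A B) = (x \in A) (+) (x \in B).
Proof. rewrite !inE; by case: (x \in A); case: (x \in B). Qed.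

Lemma odd_sd A B : odd #|sd A B| = odd #|A| (+) odd #|B|.
Proof.
rewrite /sd cardsU.
have -> : (A :\: B) :&: (B :\: A) = set0.
  by apply/setP=> x; rewrite !inE; case: (x \in A); case: (x \in B).
rewrite cards0 subn0 -(cardsID B A) -(cardsID A B) setIC !oddD.
by case: (odd _); case: (odd _); case: (odd _).
Qed.

Definition deg (K : {set X}) v := #|[set h in K | rt h == v]|.
Definition bd (K : {set X}) : {set X} := [set v in vertices T | odd (deg K v)].

Lemma deg_sd A B v : odd (deg (sd A B) v) = odd (deg A v) (+) odd (deg B v).
Proof.
rewrite /deg -odd_sd; congr (odd _); apply: eq_card => x.
rewrite !inE; by case: (x \in A); case: (x \in B); case: (rt x == v).
Qed.

Lemma bd_sd A B : bd (sd A B) = sd (bd A) (bd B).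
Proof.
apply/setP=> v; rewrite in_sd [in LHS]inE [v \in bd A]inE [v \in bd B]inE deg_sd; by case: (v \in vertices T).
Qed.

Lemma rt_vert x : rt x \in vertices T.
Proof. by rewrite inE groot_idem. Qed.

Lemma oddsum (A : {set X}) (F : X -> nat) :
  odd (\sum_(i in A) F i) = odd #|[set i in A | odd (F i)]|.
Proof.
have -> : #|[set i in A | odd (F i)]| = \sum_(i in A) (odd (F i) : nat).
  rewrite -sum1_card.
  rewrite (eq_bigl (fun i => (i \in A) && odd (F i))); last by move=> i; rewrite inE.
  rewrite big_mkcondr; apply: eq_bigr => i _; by case: (odd _).
elim/big_rec2: _ => // i a b _ IH.
by rewrite !oddD IH oddb.
Qed.

Lemma handshake K : odd #|bd K| = odd #|K|.
Proof.
have -> : #|K| = \sum_(v in vertices T) deg K v.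
  rewrite -sum1_card (partition_big rt (fun v => v \in vertices T)); last by move=> i _; exact: rt_vert.
  apply: eq_bigr => v _; rewrite /deg -sum1_card; apply: eq_bigl => h; by rewrite inE.
by rewrite oddsum.
Qed.

Lemma io_he h : h \in half_edges T -> io h \in half_edges T.
Proof.
rewrite !inE => /eqP ne; apply/eqP => E; apply: ne.
have E2 : h = io h by rewrite -{1}(giota_invol h) -E giota_root E.
by rewrite {2}E2 -E -E2.
Qed.


Definition IH : {set X} := [set h in half_edges T | io h != h].
Definition Aset : {set {set X}} :=
  [set H : {set X} | (H \subset IH) && [forall h in H, io h \in H]].

Lemma io_in H h : H \in Aset -> (io h \in H) = (h \in H).
Proof.
rewrite inE => /andP [_ /forall_inP cl].
apply/idP/idP => [/cl|/cl //]; by rewrite giota_invol.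
Qed.

Lemma io_IH h : h \in IH -> io h \in IH.
Proof.
move=> hI; have := hI; rewrite inE => /andP [he ne]; rewrite inE.
have := io_he he; rewrite inE => ->; rewrite giota_invol /=.
by rewrite eq_sym.
Qed.

Lemma sd_A H1 H2 : H1 \in Aset -> H2 \in Aset -> sd H1 H2 \in Aset.
Proof.
move=> A1 A2; have := A1; have := A2; rewrite !inE => /andP [s2 _] /andP [s1 _].
apply/andP; split.
  apply/subsetP => x; rewrite in_sd.
  by case: (boolP (x \in H1)) => [/(subsetP s1)//|_ /(subsetP s2)].
apply/forall_inP => x; by rewrite !in_sd !io_in.
Qed.

Lemma set0_A : set0 \in Aset.
Proof. by rewrite inE sub0set; apply/forall_inP => x; rewrite inE. Qed.

Lemma bd0 : bd set0 = set0.
Proof.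
apply/setP => v; rewrite !inE /deg.
have -> : [set h in (set0 : {set X}) | rt h == v] = set0 by apply/setP=> x; rewrite !inE.
by rewrite cards0 andbF.
Qed.

Lemma deg1 h v : deg [set h] v = (rt h == v).
Proof.
rewrite /deg; case: (boolP (rt h == v)) => E.
  have -> : [set x in [set h] | rt x == v] = [set h].
    by apply/setP=> x; rewrite !inE; case: (eqVneq x h) => // ->.
  by rewrite cards1.
apply/eqP; rewrite cards_eq0; apply/eqP/setP => x; rewrite !inE.
by case: (eqVneq x h) => // ->; rewrite (negbTE E).
Qed.

Lemma edge_A h : h \in IH -> [set h; io h] \in Aset.
Proof.
move=> hI; rewrite inE; apply/andP; split.
  by apply/subsetP => x; rewrite in_set2 => /orP [] /eqP ->; rewrite ?io_IH.
apply/forall_inP => x; rewrite !in_set2 => /orP [] /eqP ->; by rewrite ?giota_invol eqxx ?orbT.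
Qed.

Lemma edge_bd h : h \in IH -> bd [set h; io h] = sd [set rt h] [set rt (io h)].
Proof.
move=> hI.
have -> : [set h; io h] = sd [set h] [set io h].
  have ne : io h != h by move: hI; rewrite inE => /andP [].
  apply/setP => x; rewrite in_sd !inE.
  case: (eqVneq x h) => [->|]; first by rewrite eq_sym (negbTE ne).
  by case: (x == io h).
apply/setP => v; rewrite in_sd [v \in bd _]inE deg_sd !deg1 !in_set1.
rewrite !oddb.
case: (boolP (v \in vertices T)) => Vv; first by rewrite ![v == _]eq_sym.
case: (eqVneq v (rt h)) => [E|]; first by move: Vv; rewrite E rt_vert.
case: (eqVneq v (rt (io h))) => [E|] //; by move: Vv; rewrite E rt_vert.
Qed.

Lemma path_bd v w : fingraph.connect (@adj T) v w ->
  exists2 H, H \in Aset & bd H = sd [set v] [set w].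
Proof.
move/fingraph.connectP => [p pth ->]; elim: p v pth => [|u p IHp] v /=.
  move=> _; exists set0; first exact: set0_A.
  by rewrite bd0; apply/setP => x; rewrite in_sd in_set0 addbb.
move=> /andP [a pth]; have [H AH bdH] := IHp u pth.
move: a => /existsP [h /and4P [he ne /eqP rv /eqP ru]].
have hI : h \in IH by rewrite inE he ne.
exists (sd [set h; io h] H); first by apply: sd_A => //; exact: edge_A.
rewrite bd_sd bdH edge_bd // rv ru; apply/setP => x; rewrite !in_sd.
by case: (x \in [set v]); case: (x \in [set u]); case: (x \in [set last u p]).
Qed.

Lemma even_bd_n : connected_graph T -> forall n (S : {set X}), #|S| <= n ->
  S \subset vertices T -> ~~ odd #|S| -> exists2 H, H \in Aset & bd H = S.
Proof.
move=> conn; elim=> [|n IHn] S.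
  rewrite leqn0 cards_eq0 => /eqP -> _ _.
  by exists set0; [exact: set0_A | exact: bd0].
move=> lem sV ev.
case: (eqVneq S set0) => [->|]; first by exists set0; [exact: set0_A | exact: bd0].
case/set0Pn => v vS.
have cS1 : #|S| = #|S :\ v|.+1 by rewrite (cardsD1 v S) vS.
have : S :\ v != set0.
  rewrite -cards_eq0; apply: contra ev => /eqP m0.
  by rewrite cS1 m0.
case/set0Pn => w wS1.
have [wv wS] := setD1P wS1.
have cS2 : #|S :\ v| = #|S :\ v :\ w|.+1 by rewrite (cardsD1 w (S :\ v)) wS1.
have [H' AH' bdH'] : exists2 H, H \in Aset & bd H = S :\ v :\ w.
  apply: IHn.
  - lia.
  - by apply: subset_trans sV; apply/subsetP => x; rewrite !inE => /and3P [].
  - by move: ev; rewrite cS1 cS2 /= negbK.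
have [Hvw Avw bdvw] := path_bd (conn v w (subsetP sV v vS) (subsetP sV w wS)).
exists (sd H' Hvw); first exact: sd_A.
rewrite bd_sd bdH' bdvw; apply/setP => x; rewrite in_sd in_sd !inE.
case: (eqVneq x v) => [->|xv]; first by rewrite vS eq_sym (negbTE wv).
by case: (eqVneq x w) => [->|xw] /=; rewrite ?wS ?andbF ?andbT ?addbF.
Qed.


Lemma edge_in x : x \in IH -> [set x; io x] \in edges T.
Proof. by move=> xI; apply/imsetP; exists x. Qed.

Lemma cardA : #|Aset| <= 2 ^ #|edges T|.
Proof.
pose g (H : {set X}) := [set e in edges T | e \subset H].
have inj : {in Aset &, injective g}.
  move=> H1 H2 A1 A2 E; apply/setP => x.
  case: (boolP (x \in IH)) => xI; last first.
    have sub H : H \in Aset -> (x \in H) = false.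
      rewrite inE => /andP [s _]; apply/negbTE; apply: contra xI; exact: (subsetP s).
    by rewrite !sub.
  have key H : H \in Aset -> (x \in H) = ([set x; io x] \in g H).
    move=> AH; rewrite inE edge_in //=; apply/idP/idP => [xH|/subsetP s].
      by apply/subsetP => y; rewrite in_set2 => /orP [] /eqP ->; rewrite ?io_in.
    by apply: s; rewrite in_set2 eqxx.
  by rewrite !key // E.
rewrite -(card_in_imset inj) -card_powerset; apply: subset_leq_card.
apply/subsetP => F /imsetP [H _ ->]; rewrite powersetE; apply/subsetP => e.
by rewrite inE => /andP [].
Qed.

Definition Bset : {set {set X}} :=
  [set S : {set X} | (S \subset vertices T) && ~~ odd #|S|].

Lemma cardB v0 : v0 \in vertices T -> 2 ^ (#|vertices T|.-1) <= #|Bset|.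
Proof.
move=> V0.
pose f (U : {set X}) := if odd #|U| then v0 |: U else U.
have fK U : U \in powerset (vertices T :\ v0) -> f U :\ v0 = U.
  rewrite powersetE => sU.
  have nU : v0 \notin U by apply/negP => /(subsetP sU); rewrite !inE eqxx.
  rewrite /f; case: (odd _); first by rewrite setU1K.
  apply/setP => x; rewrite !inE; case: (eqVneq x v0) => [->|] //=; by rewrite (negbTE nU).
have inj : {in powerset (vertices T :\ v0) &, injective f}.
  by move=> U1 U2 p1 p2 E; rewrite -(fK U1) // -(fK U2) // E.
rewrite (cardsD1 v0 (vertices T)) V0 /= -card_powerset -(card_in_imset inj).
apply: subset_leq_card; apply/subsetP => S /imsetP [U pU ->].
have sU := pU; rewrite powersetE in sU.
have nU : v0 \notin U by apply/negP => /(subsetP sU); rewrite !inE eqxx.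
have sV : U \subset vertices T.
  by apply/subsetP => x /(subsetP sU); rewrite inE => /andP [].
rewrite inE /f; case: (boolP (odd #|U|)) => oU.
  rewrite cardsU1 nU /= oU andbT; apply/subsetP => x /setU1P [->//|].
  exact: (subsetP sV).
by rewrite sV.
Qed.

Lemma tree_card : is_tree T -> #|vertices T| = (#|edges T|).+1.
Proof. by case=> _ E _; lia. Qed.

Lemma bd_inj : is_tree T -> {in Aset &, injective bd}.
Proof.
move=> tr; have hE := tree_card tr; case: tr => conn _ _.
have /card_gt0P [v0 V0] : 0 < #|vertices T| by rewrite hE.
have sub : Bset \subset bd @: Aset.
  apply/subsetP => S; rewrite inE => /andP [sV ev].
  have [H AH <-] := even_bd_n conn (leqnn #|S|) sV ev; exact: imset_f.
apply/imset_injP; rewrite eqn_leq leq_imset_card /=.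
apply: leq_trans cardA _; apply: leq_trans (subset_leq_card sub).
by have := cardB V0; rewrite hE.
Qed.

Lemma bd_B (K : {set X}) : ~~ odd #|K| -> bd K \in Bset.
Proof.
move=> ev; rewrite inE handshake ev andbT.
by apply/subsetP => v; rewrite inE => /andP [].
Qed.

Lemma bd_surj : is_tree T -> forall S : {set X}, S \in Bset -> exists2 H, H \in Aset & bd H = S.
Proof.
case=> conn _ _ S; rewrite inE => /andP [sV ev].
exact: (even_bd_n conn (leqnn #|S|) sV ev).
Qed.


Lemma val_deg C v : Defs.val C v = deg (C :&: half_edges T) v.
Proof. rewrite /Defs.val /deg; apply: eq_card => x; by rewrite !inE andbA. Qed.

Lemma val_even C v : is_cycle C -> v \in vertices T -> ~~ odd (Defs.val C v).
Proof.
case=> sg cyc Vv; case: (boolP (v \in C)) => vC; first by case: (cyc v vC Vv).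
have -> : Defs.val C v = 0.
  apply/eqP; rewrite cards_eq0; apply/eqP/setP => x; rewrite inE [x \in set0]inE.
  apply/negP => /andP [xC /andP [_ /eqP E]].
  by move: vC; rewrite -E (proj1 (sg x xC)).
by [].
Qed.

Lemma he_split C : C :&: half_edges T = sd (C :&: IH) (legs_of C).
Proof.
apply/setP => x; rewrite in_sd /legs_of !inE.
by case: (x \in C); case: (rt x == x); case: (io x == x).
Qed.

Lemma cycle_A C : is_cycle C -> C :&: IH \in Aset.
Proof.
case=> sg _; rewrite inE subsetIr /=; apply/forall_inP => x.
rewrite inE => /andP [xC xI]; by rewrite inE (proj2 (sg x xC)) io_IH.
Qed.

Lemma cycle_bd C : is_cycle C -> bd (C :&: IH) = bd (legs_of C).
Proof.
move=> cy; apply/setP => v; rewrite [v \in bd _]inE [v \in bd (legs_of C)]inE.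
case: (boolP (v \in vertices T)) => //= Vv.
have := val_even cy Vv; rewrite val_deg he_split deg_sd.
by case: (odd _); case: (odd _).
Qed.

Lemma cycle_rebuild C : is_tree T -> is_cycle C ->
  C = (C :&: half_edges T) :|: rt @: (C :&: half_edges T).
Proof.
case=> _ _ w0 [sg cyc]; apply/setP => x; apply/idP/idP.
  move=> xC; case: (boolP (x \in half_edges T)) => xh.
    by rewrite in_setU in_setI xC xh.
  have Vx : x \in vertices T by move: xh; rewrite !inE negbK.
  have [c _] := cyc x xC Vx; rewrite w0 // in c.
  have : 0 < Defs.val C x by lia.
  case/card_gt0P => h; rewrite inE => /andP [hC /andP [hh /eqP <-]].
  by rewrite in_setU; apply/orP; right; apply: imset_f; rewrite in_setI hC hh.
rewrite in_setU => /orP [/setIP [] //|/imsetP [h /setIP [hC _] ->]].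
exact: (proj1 (sg h hC)).
Qed.

Lemma cycle_uniq (C1 C2 : {set X}) : is_tree T -> is_cycle C1 -> is_cycle C2 ->
  legs_of C1 = legs_of C2 -> C1 = C2.
Proof.
move=> tr c1 c2 E.
have EH : C1 :&: IH = C2 :&: IH.
  apply: (bd_inj tr (cycle_A c1) (cycle_A c2)).
  by rewrite !cycle_bd // E.
by rewrite (cycle_rebuild tr c1) (cycle_rebuild tr c2) !he_split EH E.
Qed.

Lemma cycle_exists (D : {set X}) : is_tree T -> D \subset legs T -> ~~ odd #|D| ->
  exists C, is_cycle C /\ legs_of C = D.
Proof.
move=> tr sD ev.
have [H AH bdH] := bd_surj tr (bd_B ev).
have sH : H \subset IH by move: AH; rewrite inE => /andP [].
have dj x : x \in H -> x \in D -> False.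
  move=> /(subsetP sH); rewrite inE => /andP [_ ne] /(subsetP sD).
  by rewrite inE (negbTE ne) andbF.
pose K := H :|: D.
have Khe x : x \in K -> x \in half_edges T.
  rewrite in_setU => /orP [/(subsetP sH)|/(subsetP sD)]; rewrite inE => /andP [] //.
have Ksd : K = sd H D.
  apply/setP => x; rewrite in_sd in_setU.
  case: (boolP (x \in H)) => xH; case: (boolP (x \in D)) => xD //.
  by case: (dj x xH xD).
have rnh k : rt k \notin half_edges T by rewrite inE groot_idem negbK.
pose C := K :|: rt @: K.
have CK : C :&: half_edges T = K.
  apply/setP => x; rewrite in_setI in_setU.
  case: (boolP (x \in K)) => xK /=; first by rewrite Khe.
  apply/negP => /andP [/imsetP [k _ ->]]; by rewrite (negbTE (rnh k)).
exists C; split; last first.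
  apply/setP => x; rewrite /legs_of in_setI in_setU.
  apply/idP/idP.
    move=> /andP [/orP [] ].
      rewrite in_setU => /orP [/(subsetP sH)|//]; rewrite !inE => /andP [_ ne].
      by rewrite (negbTE ne) andbF.
    move=> /imsetP [k _ ->]; rewrite inE => /andP [].
    by rewrite (negbTE (rnh k)).
  move=> xD; rewrite (subsetP sD x xD) andbT; by rewrite in_setU xD orbT.
split.
  move=> x; rewrite in_setU => /orP [xK|/imsetP [k kK ->]].
    split; first by rewrite in_setU; apply/orP; right; exact: imset_f.
    rewrite in_setU; apply/orP; left; move: xK; rewrite !in_setU.
    case/orP => [xH|xD]; first by rewrite io_in // xH.
    have := subsetP sD x xD; rewrite inE => /andP [_ /eqP ->]; by rewrite xD orbT.
  rewrite groot_idem giota_root; split; by rewrite in_setU; apply/orP; right; exact: imset_f.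
move=> v vC Vv.
have ev' : ~~ odd (Defs.val C v).
  rewrite val_deg CK Ksd deg_sd.
  have := congr1 (fun S : {set X} => v \in S) bdH; rewrite /= /bd !inE.
  move: Vv; rewrite inE => -> /= ->; by case: (odd _).
have pos : 0 < Defs.val C v.
  rewrite val_deg CK.
  have : v \notin K by apply: contraT; rewrite negbK => /Khe; rewrite inE; move: Vv; rewrite inE => ->.
  move: vC; rewrite in_setU => /orP [->//|/imsetP [k kK Ek]] _.
  by apply/card_gt0P; exists k; rewrite inE kK Ek eqxx.
have two : (2 <= Defs.val C v)%N.
  by move: ev' pos; case: (Defs.val C v) => [|[|n]].
case: tr => _ _ w0; rewrite w0 //; split => //; lia.
Qed.

End Aux.

Theorem proposition5p18 (T : graph) (D : {set gX T}) :
  is_tree T -> D \subset legs T -> ~~ odd #|D| ->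
  exists! C : {set gX T}, is_cycle C /\ legs_of C = D.
Proof.
move=> tr sD ev; have [C [cy lC]] := cycle_exists tr sD ev.
exists C; split => // C' [cy' lC'].
by apply: cycle_uniq tr cy cy' _; rewrite lC lC'.
Qed.
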